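(* Let $(\mathbf C,I)$ be a finite-type based chain complex of real inner product spaces and let $M=\{\alpha\to\beta\}$ be a single $(n+1,n)$-pairing ($\alpha\in I_{n+1}$, $\beta\in I_n$, $\partial_{\beta,\alpha}$ an isomorphism). Then for all $i$, $$\dim\operatorname{Im}(\partial^M_i)^\dagger=\dim\operatorname{Im}\partial^M_i=\begin{cases}\dim\operatorname{Im}\partial_i-\dim C_\beta & i=n+1,\\ \dim\operatorname{Im}\partial_i & \text{otherwise,}\end{cases}$$ where $\partial^M$ is the boundary of the Morse complex $\mathbf C^M$ (with the restricted inner product).
   Context: Based chain complex: chain complex $(\mathbf C,\partial)$ of finite-dimensional real inner product spaces $\mathbf C_n$, $n\ge0$, with disjoint finite index sets $I_n$ and $\mathbf C_n=\bigoplus_{\sigma\in I_n}C_\sigma$; $\partial_{\tau,\sigma}=\pi_\tau\partial i_\sigma:C_\sigma\to C_\tau$. For the single pairing $M=\{\alpha\to\beta\}$, the Morse complex $\mathbf C^M$ has summands $C_\sigma$ for $\sigma\in I\setminus\{\alpha,\beta\}$ and boundary components $\partial^M_{\tau,\sigma}=\partial_{\tau,\sigma}-\partial_{\tau,\alpha}\partial_{\beta,\alpha}^{-1}\partial_{\beta,\sigma}$; it is chain homotopy equivalent to $\mathbf C$. $\dagger$ denotes adjoint. *)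

(* Defs.v *)
From HB Require Import structures.
From mathcomp Require Import all_boot all_order all_algebra.
Set Implicit Arguments. Unset Strict Implicit. Unset Printing Implicit Defensive.
Import Order.TTheory GRing.Theory Num.Theory.
Local Open Scope ring_scope.

(* Cells (basis indices) are 'I_m; cell s lies in degree [deg s] (so the
   index sets I_n = {s | deg s = n} are disjoint), and C_s = R^(dim s)
   (column vectors) with the standard inner product; C_n is the orthogonal
   direct sum of the C_s with deg s = n.  [bd t s] is the component
   d_{t,s} : C_s -> C_t. *)
Record based_complex (R : realFieldType) (m : nat) := BasedComplex {
  deg : 'I_m -> nat;
  cdim : 'I_m -> nat;
  bd : forall t s : 'I_m, 'M[R]_(cdim t, cdim s);
  bd_deg : forall t s, (deg t).+1 != deg s -> bd t s = 0;
  bd_bd : forall r s, \sum_(t < m) bd r t *m bd t s = 0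
}.

(* The boundary d_i : C_i -> C_{i-1}, as an endomorphism of the total space
   C = (+)_s C_s (block matrix, column blocks outside degree i zeroed).
   Its rank is dim Im d_i. *)
Definition bd_total (R : realFieldType) (m : nat) (C : based_complex R m)
  (i : nat) :=
  \mxblock_(t < m, s < m)
     (if deg C s == i then bd C t s else 0 : 'M[R]_(cdim C t, cdim C s)).

Definition morse_cells (m : nat) (a b : 'I_m) : {set 'I_m} :=
  [set s | (s != a) && (s != b)].

Definition morse_cell (m : nat) (a b : 'I_m) (k : 'I_#|morse_cells a b|)
  : 'I_m := enum_val k.

(* Morse boundary component, with [inv] the inverse of d_{b,a}:
   d^M_{t,s} = d_{t,s} - d_{t,a} d_{b,a}^{-1} d_{b,s}. *)
Definition morse_bd (R : realFieldType) (m : nat) (C : based_complex R m)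
  (a b : 'I_m) (inv : 'M[R]_(cdim C a, cdim C b)) (t s : 'I_m)
  : 'M[R]_(cdim C t, cdim C s) :=
  bd C t s - bd C t a *m inv *m bd C b s.

Definition morse_total (R : realFieldType) (m : nat) (C : based_complex R m)
  (a b : 'I_m) (inv : 'M[R]_(cdim C a, cdim C b)) (i : nat) :=
  \mxblock_(k < #|morse_cells a b|, l < #|morse_cells a b|)
    (if deg C (morse_cell l) == i
     then @morse_bd R m C a b inv (morse_cell k) (morse_cell l)
     else 0 : 'M[R]_(cdim C (morse_cell k), cdim C (morse_cell l))).

(* Main.v *)
Require Import Defs.
From HB Require Import structures.
From mathcomp Require Import all_boot all_order all_algebra.
From mathcomp Require Import zify.
Import Order.TTheory GRing.Theory Num.Theory.
Local Open Scope ring_scope.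
Set Implicit Arguments. Unset Strict Implicit.

Section S.
Variables (R : realFieldType) (m : nat) (C : based_complex R m).
Local Notation d := (cdim C).
Definition J (t s : 'I_m) : 'M[R]_(d t, d s) := if t == s then pid_mx (d t) else 0.
Lemma JJ t : J t t = 1%:M. Proof. by rewrite /J eqxx pid_mx_1. Qed.
Lemma Jneq t s : t != s -> J t s = 0. Proof. by rewrite /J => /negbTE ->. Qed.
Lemma sumJl p t (X : forall u, 'M[R]_(d u, p)) : \sum_u J t u *m X u = X t.
Proof.
rewrite (bigD1 t) //= JJ mul1mx big1 ?addr0 // => u ut.
by rewrite Jneq ?mul0mx // eq_sym.
Qed.
Lemma sumJr p t (X : forall u, 'M[R]_(p, d u)) : \sum_u X u *m J u t = X t.
Proof.
rewrite (bigD1 t) //= JJ mulmx1 big1 ?addr0 // => u ut.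
by rewrite Jneq ?mulmx0.
Qed.
Variables (a b : 'I_m) (inv : 'M[R]_(d a, d b)).
Local Notation k := #|morse_cells a b|.
Local Notation mc := (@morse_cell m a b).
Lemma sum_mc (T : nmodType) (F : 'I_m -> T) :
  \sum_(l < k) F (mc l) = \sum_(u in morse_cells a b) F u.
Proof. by rewrite (big_enum_val F). Qed.

Definition Smx : 'M[R]_(\sum_(t < m) d t, \sum_(l < k) d (mc l)) :=
  \mxblock_(t < m, l < k) J t (mc l).
Definition STmx : 'M[R]_(\sum_(l < k) d (mc l), \sum_(t < m) d t) :=
  \mxblock_(l < k, t < m) J (mc l) t.
Lemma restrict (X : forall t s : 'I_m, 'M[R]_(d t, d s)) :
  STmx *m \mxblock_(t, s) X t s *m Smx = \mxblock_(k0 < k, l < k) X (mc k0) (mc l).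
Proof.
rewrite /STmx /Smx !mul_mxblock; apply: eq_mxblock => k0 l.
under eq_bigr do rewrite sumJl.
by rewrite sumJr.
Qed.
Variable n : nat.
Hypotheses (ha : deg C a = n.+1) (hb : deg C b = n)
  (hl : inv *m bd C b a = 1%:M) (hr : bd C b a *m inv = 1%:M).
Local Notation bd := (bd C).
Local Notation deg := (deg C).

Lemma ab : a != b.
Proof. by apply/eqP => e; move: ha; rewrite e hb; lia. Qed.

Lemma ba : b != a.
Proof. by rewrite eq_sym ab. Qed.

Lemma bdz t s : (deg t).+1 != deg s -> bd t s = 0.
Proof. exact: bd_deg. Qed.

Lemma cellsP u : (u \in morse_cells a b) = (u != a) && (u != b).
Proof. by rewrite inE. Qed.

Lemma sum_cells_r p s (X : forall u, 'M[R]_(p, d u)) :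
  \sum_(u in morse_cells a b) X u *m J u s = if s \in morse_cells a b then X s else 0.
Proof.
rewrite big_mkcond /=.
rewrite -(sumJr s (fun u => if u \in morse_cells a b then X u else 0)).
by apply: eq_bigr => u _; case: ifP; rewrite ?mul0mx.
Qed.

Lemma sum_cells_l p t (X : forall u, 'M[R]_(d u, p)) :
  \sum_(u in morse_cells a b) J t u *m X u = if t \in morse_cells a b then X t else 0.
Proof.
rewrite big_mkcond /=.
rewrite -(sumJl t (fun u => if u \in morse_cells a b then X u else 0)).
by apply: eq_bigr => u _; case: ifP; rewrite ?mulmx0.
Qed.

Definition Yb i := \mxblock_(t < m, s < m)
  (if deg s == i then morse_bd inv t s else 0 : 'M[R]_(d t, d s)).

Lemma morse_eq i : morse_total inv i = STmx *m Yb i *m Smx.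
Proof. by rewrite /Yb restrict. Qed.

Definition Umx : 'M[R]_(\sum_(t < m) d t, d a) := \mxcol_t bd t a.
Definition Vmx i : 'M[R]_(d b, \sum_(t < m) d t) :=
  \mxrow_s (if deg s == i then bd b s else 0).
Definition Ea : 'M[R]_(\sum_(t < m) d t, d a) := \mxcol_t J t a.
Definition Pb : 'M[R]_(d b, \sum_(t < m) d t) := \mxrow_s J b s.

Lemma Y_eq i : Yb i = bd_total C i - Umx *m inv *m Vmx i.
Proof.
rewrite /Yb /bd_total /Umx /Vmx mxcol_mul mul_mxcol_mxrow -mxblockB.
apply: eq_mxblock => t s; rewrite /morse_bd.
by case: ifP => _; rewrite ?mulmx0 ?subr0.
Qed.

Lemma U_eq : Umx = bd_total C n.+1 *m Ea.
Proof.
rewrite /Umx /bd_total /Ea mul_mxblock_mxrow; apply: eq_mxcol => t.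
by rewrite (sumJr a (fun u => if deg u == n.+1 then bd t u else 0)) ha eqxx.
Qed.

Lemma V_eq i : Vmx i = Pb *m bd_total C i.
Proof.
rewrite /Vmx /bd_total /Pb mul_mxrow_mxblock; apply: eq_mxrow => s.
by rewrite (sumJl b (fun u => if deg s == i then bd u s else 0)).
Qed.

Lemma PbU : Pb *m Umx = bd b a.
Proof. by rewrite /Pb /Umx mul_mxrow_mxcol (sumJl b (fun u => bd u a)). Qed.

Lemma V0 i : i != n.+1 -> Vmx i = 0.
Proof.
move=> hi; rewrite /Vmx -(mxrow0 (q_ := d)); apply: eq_mxrow => s.
case: eqP => // es; apply: bdz; rewrite hb es; by rewrite eq_sym.
Qed.
Lemma bdaa : bd a a = 0.
Proof. by apply: bdz; rewrite ha; apply/eqP; lia. Qed.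
Lemma bdbb : bd b b = 0.
Proof. by apply: bdz; rewrite hb; apply/eqP; lia. Qed.

Lemma bd_b_expr t :
  bd t b = - (\sum_(u in morse_cells a b) bd t u *m bd u a) *m inv.
Proof.
have h := bd_bd C t a.
rewrite (bigD1 b) //= (bigD1 a) /= ?ab // bdaa mulmx0 add0r in h.
have -> : \sum_(u in morse_cells a b) bd t u *m bd u a =
   \sum_(i | (i != b) && (i != a)) bd t i *m bd i a.
  by apply: eq_bigl => u; rewrite cellsP andbC.
have -> : bd t b = bd t b *m bd b a *m inv by rewrite -mulmxA hr mulmx1.
by move/eqP: h; rewrite addr_eq0 => /eqP ->.
Qed.

Definition Ye i t s : 'M[R]_(d t, d s) :=
  if deg s == i then morse_bd inv t s else 0.

Definition Wc i := \mxblock_(l < k, s < m)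
  (J (mc l) s - (if i == n then bd (mc l) a *m inv *m J b s else 0)).

Lemma col_fact i : Yb i = Yb i *m Smx *m Wc i.
Proof.
rewrite /Yb /Smx /Wc !mul_mxblock; apply: eq_mxblock => t s.
rewrite -/(Ye i t s).
under eq_bigr => l _ do rewrite (sumJr (mc l) (Ye i t)).
rewrite (sum_mc (fun u => Ye i t u *m (J u s - (if i == n then bd u a *m inv *m J b s else 0)))).
under eq_bigr do rewrite mulmxBr.
rewrite sumrB sum_cells_r.
case: (eqVneq s a) => [->|sa].
  rewrite cellsP eqxx /= (Jneq ba) big1 ?subr0.
    by rewrite /Ye /morse_bd -!mulmxA hl mulmx1 subrr if_same.
  by move=> u _; rewrite mulmx0 if_same mulmx0.
case: (eqVneq s b) => [->|sb].
  rewrite cellsP eqxx andbF JJ sub0r.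
  case: eqP => [->|ni]; last first.
    rewrite big1 ?oppr0; last by move=> u _; rewrite mulmx0.
    by rewrite /Ye hb; case: eqP => // e; case: ni.
  rewrite /Ye hb eqxx /morse_bd bdbb mulmx0 subr0 bd_b_expr mulNmx mulmx_suml.
  congr (- _); apply: eq_bigr => u _.
  rewrite mulmx1 !mulmxA; congr (_ *m inv).
  case: eqP => du.
    by rewrite (bdz (t := b) (s := u)) ?mulmx0 ?subr0 // hb du; apply/eqP; lia.
  by rewrite (bdz (t := u) (s := a)) ?mulmx0 // ha; apply/eqP; lia.
rewrite cellsP sa sb /= (Jneq (t:=b) (s:=s) (negbT (introF eqP (fun e => (negP sb) (introT eqP (esym e)))))) big1 ?subr0 //.
by move=> u _; rewrite mulmx0 if_same mulmx0.
Qed.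
Lemma bd_a_expr s :
  bd a s = - inv *m (\sum_(u in morse_cells a b) bd b u *m bd u s).
Proof.
have h := bd_bd C b s.
rewrite (bigD1 b) //= (bigD1 a) /= ?ab // bdbb mul0mx add0r in h.
have -> : \sum_(u in morse_cells a b) bd b u *m bd u s =
   \sum_(i | (i != b) && (i != a)) bd b i *m bd i s.
  by apply: eq_bigl => u; rewrite cellsP andbC.
have -> : bd a s = inv *m (bd b a *m bd a s) by rewrite mulmxA hl mul1mx.
by move/eqP: h; rewrite addr_eq0 => /eqP ->; rewrite mulmxN mulNmx.
Qed.

Definition Wr i := \mxblock_(t < m, l < k)
  (J t (mc l) - (if i == n.+2 then J t a *m inv *m bd b (mc l) else 0)).

Lemma row_fact i : Yb i = Wr i *m (STmx *m Yb i).
Proof.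
rewrite /Yb /STmx /Wr [STmx *m _]mul_mxblock mul_mxblock; apply: eq_mxblock => t s.
rewrite -/(Ye i t s).
under eq_bigr => l _ do rewrite (sumJl (mc l) (fun u => Ye i u s)).
rewrite (sum_mc (fun u => (J t u - (if i == n.+2 then J t a *m inv *m bd b u else 0)) *m Ye i u s)).
under eq_bigr do rewrite mulmxBl.
rewrite sumrB sum_cells_l.
case: (eqVneq t a) => [->|ta].
  rewrite cellsP eqxx /= JJ mul1mx sub0r.
  rewrite /Ye /morse_bd bdaa !mul0mx subr0.
  case: (eqVneq i n.+2) => [ei|ni]; last first.
    rewrite big1 ?oppr0; last by move=> u _; rewrite mul0mx.
    case: eqP => // ds; apply: bdz; rewrite ha ds; apply/eqP => e; move/eqP: ni; apply; lia.
  case: eqP => ds; last by rewrite big1 ?oppr0 // => u _; rewrite mulmx0.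
  rewrite bd_a_expr mulmx_sumr -sumrN; apply: eq_bigr => u _.
  rewrite (bdz (t := b) (s := s)) ?mulmx0 ?subr0 ?mulmxA ?mulNmx //.
  by rewrite hb ds ei; apply/eqP; lia.
case: (eqVneq t b) => [->|tb].
  rewrite cellsP eqxx andbF big1 ?subr0; last first.
    by move=> u _; rewrite (Jneq ba) !mul0mx if_same mul0mx.
  by rewrite /Ye /morse_bd hr mul1mx subrr if_same.
rewrite cellsP ta tb /= big1 ?subr0 // => u _.
by rewrite (Jneq ta) !mul0mx if_same mul0mx.
Qed.
Lemma rank_restrict i : \rank (STmx *m Yb i *m Smx) = \rank (Yb i).
Proof.
apply/eqP; rewrite eqn_leq; apply/andP; split.
  exact: leq_trans (mxrankM_maxl _ _) (mxrankM_maxr _ _).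
rewrite {1}(row_fact i); apply: leq_trans (mxrankM_maxr _ _) _.
rewrite {1}(col_fact i) !mulmxA; exact: mxrankM_maxl.
Qed.

Lemma rank_Y_ne i : i != n.+1 -> \rank (Yb i) = \rank (bd_total C i).
Proof. by move=> hi; rewrite Y_eq V0 // mulmx0 subr0. Qed.

Lemma dab : d a = d b.
Proof.
apply/eqP; rewrite eqn_leq; apply/andP; split.
  rewrite -{1}(mxrank1 R (d a)) -hl; exact: leq_trans (mxrankM_maxr _ _) (rank_leq_row _).
rewrite -{1}(mxrank1 R (d b)) -hr; exact: leq_trans (mxrankM_maxr _ _) (rank_leq_row _).
Qed.

Lemma rank_U : \rank Umx = d b.
Proof.
rewrite -dab; apply/eqP; rewrite eqn_leq rank_leq_col /=.
rewrite -{1}(mxrank1 R (d a)) -hl -PbU mulmxA.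
exact: leq_trans (mxrankM_maxr _ _) (leqnn _).
Qed.

Lemma rank_Y_n1 : \rank (Yb n.+1) = (\rank (bd_total C n.+1) - d b)%N.
Proof.
set Z := bd_total C n.+1.
have hY : Yb n.+1 = Z - Umx *m inv *m (Pb *m Z) by rewrite Y_eq V_eq.
have hPY : Pb *m Yb n.+1 = 0.
  by rewrite hY mulmxBr !mulmxA PbU hr mul1mx subrr.
have hY2 : Yb n.+1 = Z *m (1%:M - Ea *m inv *m (Pb *m Z)).
  by rewrite hY U_eq mulmxBr mulmx1 !mulmxA.
have hZ : Z = Yb n.+1 + Umx *m (inv *m (Pb *m Z)).
  by rewrite hY !mulmxA subrK.
have disj : ((Yb n.+1)^T :&: Umx^T)%MS = 0.
  apply/eqP; rewrite -submx0; apply/rV_subP => w.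
  rewrite sub_capmx => /andP [/submxP [x ->] /submxP [y e]].
  have hy : y *m (bd b a)^T = 0.
    have := congr1 (mulmx^~ Pb^T) e.
    by rewrite -!mulmxA -!trmx_mul hPY PbU trmx0 mulmx0 => <-.
  have y0 : y = 0.
    by rewrite -[y]mulmx1 -trmx1 -hl trmx_mul mulmxA hy mul0mx.
  by rewrite e y0 mul0mx sub0mx.
have hrk : \rank Z^T = \rank ((Yb n.+1)^T + Umx^T)%MS.
  apply/eqP; rewrite eqn_leq !mxrankS //.
    rewrite addsmx_sub; apply/andP; split.
      by rewrite hY2 trmx_mul submxMl.
    by rewrite U_eq trmx_mul submxMl.
  rewrite {1}hZ linearD /= trmx_mul.
  by apply: addmx_sub_adds => //; exact: submxMl.
move: hrk; rewrite mxrank_disjoint_sum // !mxrank_tr rank_U => ->.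
by rewrite addnK.
Qed.
End S.

Theorem mainTheorem14 (R : realFieldType) (m : nat) (C : based_complex R m)
  (n : nat) (a b : 'I_m) (inv : 'M[R]_(cdim C a, cdim C b)) :
  deg C a = n.+1 -> deg C b = n ->
  inv *m bd C b a = 1%:M -> bd C b a *m inv = 1%:M ->
  forall i : nat,
    \rank (morse_total inv i)^T = \rank (morse_total inv i) /\
    \rank (morse_total inv i) =
      (if i == n.+1 then (\rank (bd_total C i) - cdim C b)%N
       else \rank (bd_total C i)).
Proof.
move=> ha hb hl hr i; split; first exact: mxrank_tr.
rewrite morse_eq (rank_restrict ha hb hl hr).
case: eqP => [->|/eqP ni]; first by apply: rank_Y_n1.
by apply: (@rank_Y_ne _ _ _ _ _ inv n hb).
Qed.
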